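(* Let $\mathcal{C}$ be a category, let $\mathcal{M}$ be a class of morphisms of $\mathcal{C}$, and let $T$ be an object of $\mathcal{C}$. Let $\mathcal{M}/T$ be the category whose objects are pairs $(S,s)$ with $s : S \to T$ in $\mathcal{M}$ and whose morphisms $f:(S,s)\to(S',s')$ are morphisms $f:S\to S'$ of $\mathcal{C}$ with $s'\circ f = s$. Define $T_{\mathcal{M}} : \mathcal{M}/T \to \mathcal{C}$ by $T_{\mathcal{M}}(S,s) = S$, $T_{\mathcal{M}}f = f$, and $\tau_{(S,s)} = s$. Then $(\mathcal{M}/T, T_{\mathcal{M}}, \tau)$ is an $\mathcal{M}$-grading of $T$, and it is a pseudoterminal object of the 2-category $\mathrm{Grade}_{\mathcal{M}}(T)$. Explicitly, for every $\mathcal{M}$-grading $(\mathcal{G},G,g)$ of $T$: (i) there exists a morphism of $\mathcal{M}$-gradings $(F,f) : (\mathcal{G},G,g) \to (\mathcal{M}/T, T_{\mathcal{M}}, \tau)$; and (ii) this morphism is essentially unique, in the sense that there is an assignment, natural in $(F',f')$, of an invertible 2-cell $(F',f') \cong (F,f)$ to every morphism of $\mathcal{M}$-gradings $(F',f') : (\mathcal{G},G,g) \to (\mathcal{M}/T, T_{\mathcal{M}}, \tau)$.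
   Context: An $\mathcal{M}$-grading $(\mathcal{G},G,g)$ of an object $T$ of $\mathcal{C}$ consists of a category $\mathcal{G}$, a functor $G:\mathcal{G}\to\mathcal{C}$, and a natural transformation with components $g_d : Gd \to T$ (i.e. a cocone from $G$ to $T$) all of which lie in $\mathcal{M}$. A morphism $(F,f):(\mathcal{G},G,g)\to(\mathcal{G}',G',g')$ is a functor $F:\mathcal{G}\to\mathcal{G}'$ together with a natural isomorphism $f : G'\cdot F \cong G$ such that $g_d\circ f_d = g'_{Fd}$ for all $d$. A 2-cell $\beta:(F,f)\Rightarrow(F',f')$ is a natural transformation $\beta:F\Rightarrow F'$ with $f'\circ(G'\cdot\beta) = f$. These data form the 2-category $\mathrm{Grade}_{\mathcal{M}}(T)$. *)

(* Defs.v *)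
From Stdlib Require Import ProofIrrelevance.

Record Category := {
  Obj : Type;
  Hom : Obj -> Obj -> Type;
  cid : forall a, Hom a a;
  ccomp : forall a b c, Hom b c -> Hom a b -> Hom a c;
  comp_assoc : forall a b c d (h : Hom c d) (g : Hom b c) (f : Hom a b),
      ccomp a c d h (ccomp a b c g f) = ccomp a b d (ccomp b c d h g) f;
  comp_id_l : forall a b (f : Hom a b), ccomp a b b (cid b) f = f;
  comp_id_r : forall a b (f : Hom a b), ccomp a a b f (cid a) = f
}.
Arguments Hom {c} a b : rename.
Arguments cid {c} a : rename.
Arguments ccomp {c a b c0} _ _ : rename.

Record Functor (C D : Category) := {
  fobj : Obj C -> Obj D;
  fmap : forall a b, Hom a b -> Hom (fobj a) (fobj b);
  fmap_id : forall a, fmap a a (cid a) = cid (fobj a);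
  fmap_comp : forall a b c (g : Hom b c) (f : Hom a b),
      fmap a c (ccomp g f) = ccomp (fmap b c g) (fmap a b f)
}.
Arguments fobj {C D} f a : rename.
Arguments fmap {C D} f {a b} u : rename.

Definition MorClass (C : Category) := forall a b : Obj C, @Hom C a b -> Prop.

Section Slice.
Variables (C : Category) (M : MorClass C) (T : Obj C).

Record SliceObj := {
  sl_dom : Obj C;
  sl_map : Hom sl_dom T;
  sl_inM : M _ _ sl_map
}.

Record SliceHom (x y : SliceObj) := {
  sh_map : Hom (sl_dom x) (sl_dom y);
  sh_comm : ccomp (sl_map y) sh_map = sl_map x
}.
Arguments sh_map {x y} _.

Lemma SliceHom_eq x y (f g : SliceHom x y) : sh_map f = sh_map g -> f = g.
Proof.
  destruct f as [f hf], g as [g hg]; simpl; intros ->.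
  f_equal; apply proof_irrelevance.
Qed.

Definition slice_id (x : SliceObj) : SliceHom x x.
Proof. refine {| sh_map := cid (sl_dom x) |}. apply comp_id_r. Defined.

Definition slice_comp (x y z : SliceObj) (g : SliceHom y z) (f : SliceHom x y)
  : SliceHom x z.
Proof.
  refine {| sh_map := ccomp (sh_map g) (sh_map f) |}.
  rewrite comp_assoc, (sh_comm _ _ g), (sh_comm _ _ f). reflexivity.
Defined.

Definition slice_cat : Category.
Proof.
  refine {| Obj := SliceObj; Hom := SliceHom; cid := slice_id;
            ccomp := slice_comp |}.
  - intros; apply SliceHom_eq; simpl; apply comp_assoc.
  - intros; apply SliceHom_eq; simpl; apply comp_id_l.
  - intros; apply SliceHom_eq; simpl; apply comp_id_r.
Defined.

Definition slice_forget : Functor slice_cat C.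
Proof.
  refine {| fobj := (sl_dom : Obj slice_cat -> Obj C);
            fmap := fun x y (f : @Hom slice_cat x y) => sh_map f |}.
  - reflexivity.
  - reflexivity.
Defined.

End Slice.

Record GradingData (C : Category) (T : Obj C) := {
  gr_cat : Category;
  gr_fun : Functor gr_cat C;
  gr_cocone : forall d : Obj gr_cat, Hom (fobj gr_fun d) T
}.
Arguments gr_cat {C T} _.
Arguments gr_fun {C T} _.
Arguments gr_cocone {C T} _ d.

(* (G,G,g) is an M-grading: g is a cocone (natural transformation G => T)
   all of whose components lie in M. *)
Definition is_grading {C : Category} (M : MorClass C) {T : Obj C}
    (Gr : GradingData C T) : Prop :=
  (forall d, M _ _ (gr_cocone Gr d)) /\
  (forall d d' (u : Hom d d'),
      ccomp (gr_cocone Gr d') (fmap (gr_fun Gr) u) = gr_cocone Gr d).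

Definition slice_grading {C : Category} (M : MorClass C) (T : Obj C)
  : GradingData C T :=
  {| gr_cat := slice_cat C M T;
     gr_fun := slice_forget C M T;
     gr_cocone := fun x => sl_map C M T x |}.

(* Morphism (F,f) : (G,G,g) -> (G',G',g'):  F : G -> G' and a natural
   isomorphism f : G' . F ~= G with g_d o f_d = g'_{F d}. *)
Record GradingMor {C : Category} {T : Obj C} (Gr Gr' : GradingData C T) := {
  gm_fun : Functor (gr_cat Gr) (gr_cat Gr');
  gm_iso : forall d, Hom (fobj (gr_fun Gr') (fobj gm_fun d)) (fobj (gr_fun Gr) d);
  gm_nat : forall d d' (u : Hom d d'),
      ccomp (fmap (gr_fun Gr) u) (gm_iso d)
      = ccomp (gm_iso d') (fmap (gr_fun Gr') (fmap gm_fun u));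
  gm_invertible : forall d, exists h : Hom (fobj (gr_fun Gr) d)
                                          (fobj (gr_fun Gr') (fobj gm_fun d)),
      ccomp h (gm_iso d) = cid _ /\ ccomp (gm_iso d) h = cid _;
  gm_tri : forall d, ccomp (gr_cocone Gr d) (gm_iso d) = gr_cocone Gr' (fobj gm_fun d)
}.
Arguments gm_fun {C T Gr Gr'} _.
Arguments gm_iso {C T Gr Gr'} _ d.

Record TwoCell {C : Category} {T : Obj C} {Gr Gr' : GradingData C T}
    (m m' : GradingMor Gr Gr') := {
  tc_comp : forall d, Hom (fobj (gm_fun m) d) (fobj (gm_fun m') d);
  tc_nat : forall d d' (u : Hom d d'),
      ccomp (fmap (gm_fun m') u) (tc_comp d) = ccomp (tc_comp d') (fmap (gm_fun m) u);
  tc_tri : forall d,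
      ccomp (gm_iso m' d) (fmap (gr_fun Gr') (tc_comp d)) = gm_iso m d
}.
Arguments tc_comp {C T Gr Gr' m m'} _ d.

(* beta is invertible in the hom-category: there is a 2-cell gamma the other
   way with gamma . beta = id and beta . gamma = id (vertical composition,
   computed componentwise). *)
Definition invertible_2cell {C : Category} {T : Obj C} {Gr Gr' : GradingData C T}
    {m m' : GradingMor Gr Gr'} (beta : TwoCell m m') : Prop :=
  exists gamma : TwoCell m' m,
    forall d, ccomp (tc_comp gamma d) (tc_comp beta d) = cid _ /\
              ccomp (tc_comp beta d) (tc_comp gamma d) = cid _.

(* Main.v *)
Require Import Defs.
From Stdlib Require Import ClassicalEpsilon.

Lemma conj_nat (K : Category) (a a' b b' : Obj K) (f : Hom a b) (h : Hom b a)
  (f' : Hom a' b') (h' : Hom b' a') (X : Hom a a') (G : Hom b b') :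
  ccomp h' f' = cid a' -> ccomp f h = cid b -> ccomp G f = ccomp f' X ->
  ccomp X h = ccomp h' G.
Proof.
  intros H1 H2 N.
  transitivity (ccomp (ccomp h' (ccomp f' X)) h).
  { rewrite (comp_assoc _ _ _ _ _ h' f' X), H1, comp_id_l. reflexivity. }
  rewrite <- N. rewrite <- comp_assoc, <- comp_assoc, H2, comp_id_r. reflexivity.
Qed.

Section Pf.
Variables (C : Category) (M : MorClass C) (T : Obj C).
Variable Gr : GradingData C T.
Hypothesis HG : is_grading M Gr.

Definition Fobj (d : Obj (gr_cat Gr)) : SliceObj C M T :=
  {| sl_dom := fobj (gr_fun Gr) d; sl_map := gr_cocone Gr d;
     sl_inM := proj1 HG d |}.

Definition Fhom d d' (u : Hom d d') : SliceHom C M T (Fobj d) (Fobj d').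
Proof. refine (Build_SliceHom C M T (Fobj d) (Fobj d') (fmap (gr_fun Gr) u) _). exact (proj2 HG d d' u). Defined.

Definition Ffun : Functor (gr_cat Gr) (slice_cat C M T).
Proof.
  refine {| fobj := (Fobj : Obj (gr_cat Gr) -> Obj (slice_cat C M T));
            fmap := Fhom |}.
  - intros a; apply SliceHom_eq; simpl; apply fmap_id.
  - intros a b c g f; apply SliceHom_eq; simpl; apply fmap_comp.
Defined.

Definition FF : GradingMor Gr (slice_grading M T).
Proof.
  refine (Build_GradingMor C T Gr (slice_grading M T) Ffun (fun d => cid (fobj (gr_fun Gr) d)) _ _ _).
  - intros d d' u; simpl. rewrite comp_id_r, comp_id_l. reflexivity.
  - intros d; exists (cid _); split; apply comp_id_l.
  - intros d; simpl. apply comp_id_r.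
Defined.

Definition theta (Ff' : GradingMor Gr (slice_grading M T)) : TwoCell Ff' FF.
Proof.
  unshelve refine (Build_TwoCell C T Gr (slice_grading M T) Ff' FF (fun d => _) _ _).
  - refine (Build_SliceHom C M T (fobj (gm_fun Ff') d) (Fobj d) (gm_iso Ff' d) _). simpl. exact (gm_tri _ _ Ff' d).
  - intros d d' u. apply SliceHom_eq. simpl. exact (gm_nat _ _ Ff' d d' u).
  - intros d. simpl. apply comp_id_l.
Defined.

Lemma theta_inv (Ff' : GradingMor Gr (slice_grading M T)) : invertible_2cell (theta Ff').
Proof.
  pose (hx := fun d => constructive_indefinite_description _ (gm_invertible _ _ Ff' d)).
  pose (h := fun d => proj1_sig (hx d)).
  assert (Hh : forall d, ccomp (h d) (gm_iso Ff' d) = cid _ /\ ccomp (gm_iso Ff' d) (h d) = cid _)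
    by (intro d; exact (proj2_sig (hx d))).
  clearbody h. clear hx.
  unshelve eexists.
  - unshelve refine (Build_TwoCell C T Gr (slice_grading M T) FF Ff' (fun d => _) _ _).
    + refine (Build_SliceHom C M T (Fobj d) (fobj (gm_fun Ff') d) (h d) _).
      pose proof (gm_tri _ _ Ff' d) as E. simpl in E |- *. rewrite <- E.
      rewrite <- comp_assoc. destruct (Hh d) as [_ H2]. simpl in H2. rewrite H2. apply comp_id_r.
    + intros d d' u. apply SliceHom_eq. simpl.
      pose proof (gm_nat _ _ Ff' d d' u) as N. simpl in N.
      exact (conj_nat _ _ _ _ _ _ _ _ _ _ _ (proj1 (Hh d')) (proj2 (Hh d)) N).
    + intros d. simpl. exact (proj2 (Hh d)).
  - intros d; split; apply SliceHom_eq; simpl; [exact (proj1 (Hh d)) | exact (proj2 (Hh d))].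
Qed.

End Pf.

Theorem theorem2p3 (C : Category) (M : MorClass C) (T : Obj C) :
  is_grading M (slice_grading M T) /\
  forall Gr : GradingData C T, is_grading M Gr ->
    exists Ff : GradingMor Gr (slice_grading M T),
    exists theta : forall Ff' : GradingMor Gr (slice_grading M T), TwoCell Ff' Ff,
      (forall Ff', invertible_2cell (theta Ff')) /\
      (forall (Ff' Ff'' : GradingMor Gr (slice_grading M T))
              (beta : TwoCell Ff' Ff'') d,
          ccomp (tc_comp (theta Ff'') d) (tc_comp beta d) = tc_comp (theta Ff') d).
Proof.
  split.
  - split.
    + intro d. exact (sl_inM C M T d).
    + intros d d' u. exact (sh_comm C M T d d' u).
  - intros Gr HG. exists (FF C M T Gr HG), (theta C M T Gr HG). split.
    + apply theta_inv.
    + intros Ff' Ff'' beta d. apply SliceHom_eq. simpl.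
      exact (tc_tri _ _ beta d).
Qed.
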